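(* Let $G=(S,T,\pi)$ be a countable two-person win-lose game such that every set in $\mathcal{B}^1(G)$ is finite, and assume $G$ satisfies one (hence all) of: (1) $\mathcal{B}^1_{\downarrow}(G)$ is ascending-union closed; (2) $\mathcal{B}^1_{\downarrow}(G)$ contains no countable strictly ascending chain; (3) $G$ is LNG-free. Then the suprema below are attained and $$\max_{\mathbf{p}\in\Delta(S)}\inf_{\mathbf{q}\in\Delta(T)}\pi^{\mathrm{mix}}(\mathbf{p},\mathbf{q})=0=\inf_{\mathbf{q}\in\Delta(T)}\max_{\mathbf{p}\in\Delta(S)}\pi^{\mathrm{mix}}(\mathbf{p},\mathbf{q}).$$
   Context: A two-person win-lose game is $G=(S,T,\pi)$ with non-empty $S,T$ and $\pi:S\times T\to\{0,1\}$; countable means $|S|=|T|=\aleph_0$. $\Delta(X)$ is the set of probability distributions on $X$ with at most countable support; $\pi^{\mathrm{mix}}(\mathbf{p},\mathbf{q})=\sum p_sq_t\pi(s,t)$. For $s\in S$, $B_s=\{t:\pi(s,t)=1\}$, $\mathcal{B}^1(G)=\{B_s:s\in S\}$, $\mathcal{B}^1_{\downarrow}(G)=\{A\subseteq T:\exists s,\ A\subseteq B_s\}$. A family $\mathcal{F}$ is ascending-union closed if $A_i\in\mathcal{F}$ with $A_1\subset A_2\subset\cdots$ implies $\bigcup_iA_i\in\mathcal{F}$. $G$ is LNG-free if there are no sequences of distinct $s_1,s_2,\ldots\in S$ and distinct $t_1,t_2,\ldots\in T$ with $\pi(s_i,t_j)=1\iff i\ge j$. *)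

(* Defs.v *)
From HB Require Import structures.
From mathcomp Require Import all_boot all_order all_algebra.
From mathcomp Require Import all_classical all_reals all_analysis.
Set Implicit Arguments. Unset Strict Implicit. Unset Printing Implicit Defensive.
Import Order.TTheory GRing.Theory Num.Theory.
Local Open Scope classical_set_scope.
Local Open Scope ring_scope.

Definition countably_infinite (X : Type) : Prop :=
  exists f : nat -> X, bijective f.

Definition Dist (R : realType) (X : choiceType) : set (X -> R) :=
  [set p | (forall x, 0 <= p x) /\ countable [set x | p x != 0] /\
           (\esum_(x in [set: X]) (p x)%:E = 1)%E].

Definition pimix (R : realType) (S T : choiceType) (pi : S -> T -> bool)
  (p : S -> R) (q : T -> R) : \bar R :=
  \esum_(st in [set: S * T]) (p st.1 * q st.2 * (pi st.1 st.2)%:R)%:E.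

Definition Bs (S T : Type) (pi : S -> T -> bool) (s : S) : set T :=
  [set t | pi s t].

Definition B1down (S T : Type) (pi : S -> T -> bool) : set (set T) :=
  [set A | exists s, A `<=` Bs pi s].

Definition ascending_union_closed (T : Type) (F : set (set T)) : Prop :=
  forall A : nat -> set T, (forall i, F (A i)) -> (forall i, A i `<=` A i.+1) ->
    F (\bigcup_i A i).

Definition no_strict_ascending_chain (T : Type) (F : set (set T)) : Prop :=
  ~ exists A : nat -> set T, (forall i, F (A i)) /\ (forall i, A i `<` A i.+1).

Definition LNG_free (S T : Type) (pi : S -> T -> bool) : Prop :=
  ~ exists (s : nat -> S) (t : nat -> T),
      injective s /\ injective t /\ forall i j, pi (s i) (t j) <-> (j <= i)%N.

(* Main.v *)
Require Import Defs.
From HB Require Import structures.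
From mathcomp Require Import all_boot all_order all_algebra.
From mathcomp Require Import all_classical all_reals all_analysis.
From mathcomp Require Import lra ring.
From mathcomp Require finmap.
Import Order.TTheory GRing.Theory Num.Theory.
Local Open Scope classical_set_scope.
Local Open Scope ring_scope.

Module Aux.
Import finmap.
Set Implicit Arguments. Unset Strict Implicit. Unset Printing Implicit Defensive.
Local Open Scope classical_set_scope.
Local Open Scope ring_scope.

Section PartA.
Variable R : realType.
Local Open Scope ereal_scope.

Lemma esumZ (X : choiceType) (I : set X) (a : X -> \bar R) (r : R) :
  (0 <= r)%R -> (forall i, 0 <= a i) ->
  \esum_(i in I) (r%:E * a i) = r%:E * \esum_(i in I) a i.
Proof.
move=> r0 a0; rewrite /esum -ereal_supZl //; last first.
  apply/set0P; exists (\sum_(x \in set0) a x); exists set0 => //; exact: fsets_set0.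
congr ereal_sup; apply/seteqP; split => x /=.
- move=> [A [finA AI] <-]; exists (\sum_(i \in A) a i); first by exists A.
  by rewrite !fsbig_finite // ge0_sume_distrr.
- move=> [y [A [finA AI] <-] <-]; exists A => //.
  by rewrite !fsbig_finite // ge0_sume_distrr.
Qed.

Definition mass (X : choiceType) (q : X -> R) (B : set X) : \bar R :=
  \esum_(t in B) (q t)%:E.

Definition prob (X : choiceType) (q : X -> R) :=
  (forall t, (0 <= q t)%R) /\ mass q setT = 1.

Lemma Dist_prob (X : choiceType) (q : X -> R) : @Dist R X q -> prob q.
Proof. by case=> h [_ h2]; split. Qed.

Lemma mass_ge0 (X : choiceType) (q : X -> R) B :
  (forall t, (0 <= q t)%R) -> 0 <= mass q B.
Proof. by move=> h; apply: esum_ge0 => t _; rewrite lee_fin. Qed.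

Lemma mass_sub (X : choiceType) (q : X -> R) (A B : set X) :
  (forall t, (0 <= q t)%R) -> A `<=` B -> mass q A <= mass q B.
Proof.
move=> h AB; rewrite /mass esum_mkcond [X in _ <= X]esum_mkcond.
apply: le_esum => t _; case: ifPn => tA.
  by rewrite ifT //; apply/mem_set/AB; rewrite -in_setE.
by case: ifP => _ //; rewrite lee_fin.
Qed.

Lemma mass_split (X : choiceType) (q : X -> R) (A B : set X) :
  (forall t, (0 <= q t)%R) ->
  mass q B = mass q (B `&` A) + mass q (B `&` ~` A).
Proof. by move=> h; rewrite /mass (esumID A) // => t _; rewrite lee_fin. Qed.

Lemma mass_fin (X : choiceType) (q : X -> R) B :
  prob q -> mass q B = (fine (mass q B))%:E.
Proof.
move=> [h1 h2]; rewrite fineK //; rewrite ge0_fin_numE ?mass_ge0 //.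
apply: (le_lt_trans (mass_sub h1 (@subsetT _ B))); rewrite h2; exact: ltry.
Qed.

Definition rmass (X : choiceType) (q : X -> R) B := fine (mass q B).

Lemma rmass_ge0 (X : choiceType) (q : X -> R) B : prob q -> (0 <= rmass q B)%R.
Proof. by move=> pq; rewrite -lee_fin /rmass -mass_fin // mass_ge0 //; case: pq. Qed.

Lemma rmass_sub (X : choiceType) (q : X -> R) (A B : set X) :
  prob q -> A `<=` B -> (rmass q A <= rmass q B)%R.
Proof.
by move=> pq AB; rewrite -lee_fin /rmass -!mass_fin // mass_sub //; case: pq.
Qed.

Lemma rmass_le1 (X : choiceType) (q : X -> R) B : prob q -> (rmass q B <= 1)%R.
Proof.
move=> pq; have := rmass_sub pq (@subsetT _ B).
by rewrite /rmass (proj2 pq).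
Qed.

Lemma rmass_split (X : choiceType) (q : X -> R) (A B : set X) :
  prob q -> rmass q B = (rmass q (B `&` A) + rmass q (B `&` ~` A))%R.
Proof.
move=> pq; apply: EFin_inj; rewrite EFinD /rmass -!mass_fin //.
by apply: mass_split; case: pq.
Qed.

Lemma tail (X : choiceType) (q : X -> R) (d : R) :
  prob q -> (0 < d)%R -> exists F, finite_set F /\ (rmass q (~` F) < d)%R.
Proof.
move=> pq d0; have [h1 h2] := pq.
have : ((1 - d)%:E < mass q setT) by rewrite h2 lte_fin; lra.
move=> /ereal_sup_gt [y [F [finF _] <-] ly].
exists F; split => //.
have le1 : \sum_(x \in F) (q x)%:E <= mass q F.
  by apply: esum_ge; exists F => //; exact: fsets_self.
have := rmass_split F setT pq; rewrite !setTI.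
have : ((1 - d)%:E < (rmass q F)%:E) by rewrite /rmass -mass_fin //; exact: (lt_le_trans ly).
rewrite lte_fin /rmass h2 /= => ? ?; lra.
Qed.

Definition ptm (X : choiceType) (x : X) : X -> R :=
  fun y => if y == x then 1%R else 0%R.

Lemma ptm_ge0 (X : choiceType) (x y : X) : (0 <= ptm x y)%R.
Proof. by rewrite /ptm; case: ifP. Qed.

Lemma esum_ptm (X : choiceType) (x : X) (f : X -> \bar R) (B : set X) :
  (forall y, 0 <= f y) ->
  \esum_(y in B) ((ptm x y)%:E * f y) = if `[< B x >] then f x else 0.
Proof.
move=> f0; rewrite (esumID [set x]); last first.
  by move=> i _; rewrite mule_ge0 // lee_fin ptm_ge0.
rewrite [X in _ + X]esum1 ?adde0; last first.
  by move=> i [_ /= /eqP ix]; rewrite /ptm (negbTE ix) mul0e.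
case: asboolP => Bx.
  have -> : B `&` [set x] = [set x] by apply/seteqP; split=> [y []//|y /= ->]; split.
  by rewrite esum_set1 /ptm ?eqxx ?mul1e // mule_ge0 // lee_fin ptm_ge0.
have -> : B `&` [set x] = set0 by apply/seteqP; split=> y // [By /= yx]; apply: Bx; rewrite -yx.
by rewrite esum_set0.
Qed.

Lemma mass_ptm (X : choiceType) (x : X) (B : set X) :
  mass (ptm x) B = if `[< B x >] then 1 else 0.
Proof.
rewrite /mass -(@esum_ptm X x (fun=> 1) B) //.
by apply: eq_esum => y _; rewrite mule1.
Qed.

Lemma prob_ptm (X : choiceType) (x : X) : prob (ptm x).
Proof.
split; first exact: ptm_ge0.
by rewrite mass_ptm; case: asboolP => // h; exfalso; exact: h.
Qed.

Lemma Dist_ptm (X : choiceType) (x : X) : @Dist R X (ptm x).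
Proof.
split; first exact: ptm_ge0.
split; last by have [] := prob_ptm x.
apply: finite_set_countable; apply: (@sub_finite_set _ _ [set x]); last exact: finite_set1.
by move=> y /=; rewrite /ptm; case: (y =P x) => // _; rewrite eqxx.
Qed.

End PartA.
Arguments ptm {R X} x.

Section PartB.
Variable R : realType.
Variables S T : choiceType.
Variable pi : S -> T -> bool.
Local Open Scope ereal_scope.

Lemma pimix_eq (p : S -> R) (q : T -> R) :
  (forall s, (0 <= p s)%R) -> (forall t, (0 <= q t)%R) ->
  pimix pi p q = \esum_(s in setT) ((p s)%:E * mass q (Bs pi s)).
Proof.
move=> p0 q0; rewrite /pimix.
have -> : [set: S * T] = [set: S] `*`` (fun _ => [set: T]) by apply/seteqP; split.
rewrite -(esum_esum (a := fun s t => (p s * q t * (pi s t)%:R)%:E)); last by move=> s t _ _; rewrite lee_fin !mulr_ge0 // ler0n.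
apply: eq_esum => s _; rewrite /mass -esumZ //; try by move=> t; rewrite lee_fin.
rewrite [in RHS]esum_mkcond; apply: eq_esum => t _.
have [h|h] := boolP (pi s t).
  by rewrite ifT /= ?mulr1n ?mulr1 ?EFinM //; exact/mem_set.
rewrite ifF /= ?mulr0n ?mulr0 ?mule0 //; apply/negP => /set_mem; rewrite /Bs /=.
by move: h => /negP.
Qed.

Lemma pimix_ge0 (p : S -> R) (q : T -> R) :
  (forall s, (0 <= p s)%R) -> (forall t, (0 <= q t)%R) -> 0 <= pimix pi p q.
Proof. by move=> p0 q0; apply: esum_ge0 => st _; rewrite lee_fin !mulr_ge0 // ler0n. Qed.

Lemma pimix_ptm_l (s : S) (q : T -> R) :
  (forall t, (0 <= q t)%R) -> pimix pi (ptm s) q = mass q (Bs pi s).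
Proof.
move=> q0; rewrite pimix_eq //; last exact: ptm_ge0.
rewrite esum_ptm; last by move=> y; apply: mass_ge0.
by case: asboolP => // h; exfalso; apply: h.
Qed.

Lemma pimix_ptm_r (p : S -> R) (t : T) :
  (forall s, (0 <= p s)%R) -> pimix pi p (ptm t) = mass p [set s | pi s t].
Proof.
move=> p0; rewrite pimix_eq //; last exact: ptm_ge0.
rewrite /mass [in RHS]esum_mkcond; apply: eq_esum => s _.
have := mass_ptm R t (Bs pi s); rewrite /mass => ->; case: asboolP => h.
  by rewrite ifT ?mule1 //; exact/mem_set.
by rewrite ifF ?mule0 //; apply/negP => /set_mem /= hs; exact: h.
Qed.

Lemma pimix_le (p : S -> R) (q : T -> R) (r : R) :
  prob p -> (forall t, (0 <= q t)%R) -> (0 <= r)%R ->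
  (forall s, mass q (Bs pi s) <= r%:E) -> pimix pi p q <= r%:E.
Proof.
move=> [p0 p1] q0 r0 h; rewrite pimix_eq //.
apply: (@le_trans _ _ (\esum_(s in setT) (r%:E * (p s)%:E))).
  by apply: le_esum => s _; rewrite [leRHS]muleC; apply: lee_wpmul2l => //; rewrite lee_fin.
rewrite esumZ //; try by move=> s; rewrite lee_fin.
by move: p1; rewrite /mass => ->; rewrite mule1.
Qed.

End PartB.

Lemma inf_avoid (X : Type) (U : set X) :
  countably_infinite X -> finite_set U -> exists x, ~ U x.
Proof.
move=> [f bf] finU; apply/not_existsP => hall.
have inj : {in setT &, injective f}.
  by move=> x y _ _; apply: bij_inj.
have := inj_card_eq inj; move/eq_finite_set => e.
apply: infinite_nat; rewrite -e; apply: (sub_finite_set _ finU).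
by move=> _ [x _ <-]; apply: contrapT; apply: hall.
Qed.

Lemma le0_eps (R : realType) (x : \bar R) :
  (forall e : R, (0 < e)%R -> (x <= e%:E)%E) -> (x <= 0)%E.
Proof.
move=> h; case: x h => [r| |] h //.
- rewrite lee_fin; apply/negP => /negP; rewrite -ltNge => r0.
  have := h (r / 2) (divr_gt0 r0 (ltr0Sn _ _)); rewrite lee_fin; lra.
- by have := h 1 ltr01.
Qed.

Lemma mono_chain (X : Type) (A : nat -> set X) :
  (forall i, A i `<=` A i.+1) -> forall i j, (i <= j)%N -> A i `<=` A j.
Proof.
move=> h i j ij; rewrite -(subnK ij); elim: (j - i)%N => [|k IH] //.
by rewrite addSn; apply: subset_trans IH (h _).
Qed.

Lemma inj_nat_fin (X : Type) (f : nat -> X) : injective f -> ~ finite_set (range f).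
Proof.
move=> inj fin; have := @inj_card_eq _ _ setT f (in2W inj).
move/eq_finite_set => e; apply: infinite_nat; rewrite -e; exact: fin.
Qed.

Lemma escape (X : Type) (A : nat -> set X) (W : set X) :
  (forall i, A i `<` A i.+1) -> finite_set W -> exists i, ~ A i `<=` W.
Proof.
move=> h finW; apply/not_existsP => hall.
have sub i : A i `<=` W by case: (pselect (A i `<=` W)) => // /(hall i).
have ex i : exists t, A i.+1 t /\ ~ A i t.
  have [_ nsub] := h i; apply/not_existsP => nt; apply: nsub => t Ait1.
  by case: (pselect (A i t)) => // nAt; exfalso; apply: (nt t).
have [tf htf] := choice ex.
have mono := mono_chain (fun i => proj1 (h i)).
apply: (@inj_nat_fin _ tf).
- move=> i j eq; apply/eqP; case: (ltngtP i j) => // ij; exfalso.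
  + by apply: (proj2 (htf j)); rewrite -eq; apply: (mono i.+1 j ij); apply: (proj1 (htf i)).
  + by apply: (proj2 (htf i)); rewrite eq; apply: (mono j.+1 i ij); apply: (proj1 (htf j)).
- apply: (sub_finite_set _ finW) => _ [i _ <-]; exact: sub _ _ (proj1 (htf i)).
Qed.

Section Chains.
Variables (S T : choiceType) (pi : S -> T -> bool).
Local Notation D := (B1down pi).

Lemma no_chain : (forall s, finite_set (Bs pi s)) ->
  (ascending_union_closed D \/ no_strict_ascending_chain D \/ LNG_free pi) ->
  no_strict_ascending_chain D.
Proof.
move=> hfin [AUC|[//|LNG]].
  move=> [A [hD hs]]; have [s hs'] := AUC A hD (fun i => proj1 (hs i)).
  have [i ni] := escape hs (hfin s); apply: ni => t Ait; apply: hs'; by exists i.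
move=> [A [hD hs]]; apply: LNG.
have hD' : forall i, exists s, A i `<=` Bs pi s := hD.
have [sA hsA] := choice hD'.
have mono := mono_chain (fun i => proj1 (hs i)).
have pick W : finite_set W -> exists j t, A j t /\ ~ W t.
  move=> finW; have [j nj] := escape hs finW; exists j.
  apply/not_existsP => nt; apply: nj => t Ajt.
  by case: (pselect (W t)) => // nWt; exfalso; apply: (nt t).
have step : forall (i : nat) (W : set T), exists p : nat * T,
    finite_set W -> (i < p.1)%N /\ A p.1 p.2 /\ ~ W p.2.
  move=> i W; case: (pselect (finite_set W)) => finW; last first.
    have [j [t _]] := pick set0 (finite_set0 T); by exists (j, t).
  have [j [t [Ajt nWt]]] := pick W finW; exists (maxn j i.+1, t) => _ /=.
  split; first by rewrite leq_maxr.
  by split => //; apply: (mono j _ (leq_maxl _ _)).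
have [g0 hg0] := choice (fun iW : nat * set T => step iW.1 iW.2).
pose g i W := g0 (i, W).
have hg i W : finite_set W -> (i < (g i W).1)%N /\ A (g i W).1 (g i W).2 /\ ~ W (g i W).2 := hg0 (i, W).
pose st := fix st n := if n is n'.+1 then
    ((g (st n').1.1 ((st n').2 `|` Bs pi (sA (st n').1.1))).1,
     (g (st n').1.1 ((st n').2 `|` Bs pi (sA (st n').1.1))).2,
     ((st n').2 `|` Bs pi (sA (st n').1.1)))
  else ((g 0%N set0).1, (g 0%N set0).2, set0).
pose ii n := (st n).1.1; pose tt n := (st n).1.2; pose WW n := (st n).2.
have WS n : WW n.+1 = WW n `|` Bs pi (sA (ii n)) by [].
have finW n : finite_set (WW n).
  by elim: n => [|n IH]; [exact: finite_set0|rewrite WS finite_setU; split].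
have key n : A (ii n) (tt n) /\ ~ WW n (tt n).
  case: n => [|n]; first by have [_ []] := hg 0%N set0 (finite_set0 T).
  by have [_ []] := hg (ii n) (WW n.+1) (finW n.+1).
have incr n : (ii n < ii n.+1)%N by have [] := hg (ii n) (WW n.+1) (finW n.+1).
clearbody ii tt WW; clear st.
have iimono m k : (ii m <= ii (m + k))%N.
  elim: k => [|k IH]; first by rewrite addn0.
  by rewrite addnS (leq_trans IH) // ltnW.
have Wmono m k : WW m `<=` WW (m + k)%N.
  elim: k => [|k IH]; first by rewrite addn0.
  by rewrite addnS WS; apply: subset_trans IH _; apply: subsetUl.
have Bsub m n : (m < n)%N -> Bs pi (sA (ii m)) `<=` WW n.
  move=> mn; rewrite -(subnK mn) addnC.
  apply: subset_trans (Wmono m.+1 _); rewrite WS; exact: subsetUr.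
have iff a b : pi (sA (ii a)) (tt b) <-> (b <= a)%N.
  split.
    move=> h; rewrite leqNgt; apply/negP => ab.
    by apply: (proj2 (key b)); apply: (Bsub a b ab).
  move=> ba; apply: (hsA (ii a)); apply: (mono (ii b)); last exact: (proj1 (key b)).
  by rewrite -(subnK ba) addnC iimono.
exists (fun n => sA (ii n)), tt; split; [|split] => //.
- move=> x y eq; apply/eqP; case: (ltngtP x y) => // xy; exfalso.
  + have := (proj2 (iff y y) (leqnn y)); rewrite -eq => /(iff x y).
    by rewrite leqNgt xy.
  + have := (proj2 (iff x x) (leqnn x)); rewrite eq => /(iff y x).
    by rewrite leqNgt xy.
- move=> x y eq; apply/eqP; case: (ltngtP x y) => // xy; exfalso.
  + have := (proj2 (iff x x) (leqnn x)); rewrite eq => /(iff x y).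
    by rewrite leqNgt xy.
  + have := (proj2 (iff y y) (leqnn y)); rewrite -eq => /(iff y x).
    by rewrite leqNgt xy.
Qed.

Lemma no_chain_ext (P : set T -> Prop) :
  no_strict_ascending_chain D -> (forall A, P A -> D A) ->
  (forall A, P A -> exists A', P A' /\ A `<` A') -> forall A, ~ P A.
Proof.
move=> NC PD ext A0 PA0.
have tot : forall A, exists A', P A -> P A' /\ A `<` A'.
  move=> A; case: (pselect (P A)) => PA; last by exists A.
  by have [A' h] := ext A PA; exists A'.
have [f hf] := choice tot.
have Pc n : P (iter n f A0) by elim: n => [|n IH] //=; have [] := hf _ IH.
apply: NC; exists (fun n => iter n f A0); split => i; first exact: PD.
by have [] := hf _ (Pc i).
Qed.

Definition sR (A' A : set T) := D A' /\ A `<` A'.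

Lemma all_acc : no_strict_ascending_chain D -> forall A, Acc sR A.
Proof.
move=> NC A; case: (pselect (Acc sR A)) => [h|nA]; first exact: h.
exfalso.
have ext : forall A, ~ Acc sR A -> exists A', sR A' A /\ ~ Acc sR A'.
  move=> B nB; apply/not_existsP => h; apply: nB; constructor => B' hB'.
  case: (pselect (Acc sR B')) => [h2|nB']; first exact: h2.
  by exfalso; apply: (h B').
have [A1 [[DA1 _] nA1]] := ext A nA.
have := @no_chain_ext (fun B => D B /\ ~ Acc sR B) NC.
move=> /(_ (fun B h => proj1 h)) H; apply: (H _ A1 (conj DA1 nA1)).
by move=> B [_ nB]; have [B' [[DB' sB'] nB']] := ext B nB; exists B'.
Qed.

End Chains.

Lemma finite_min (R : realType) (X : choiceType) (F : set X) (P : X -> R -> Prop) :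
  finite_set F -> (forall t, F t -> exists d, 0 < d /\ P t d) ->
  (forall t d d', P t d -> 0 < d' -> d' <= d -> P t d') ->
  exists d, 0 < d /\ forall t, F t -> P t d.
Proof.
move=> finF hex hmon.
suff: forall s : seq X, (forall t, t \in s -> F t) ->
    exists d, 0 < d /\ forall t, t \in s -> P t d.
  move=> /(_ (finmap.enum_fset (fset_set F))) [].
    by move=> t ht; have : t \in fset_set F by []; rewrite in_fset_set // => /set_mem.
  move=> d [d0 hd]; exists d; split => // t Ft; apply: hd.
  have : t \in fset_set F by rewrite in_fset_set //; apply/mem_set.
  by [].
elim=> [|a s IH] hs; first by exists 1; split.
have [da [da0 Pa]] := hex a (hs a (mem_head _ _)).
have [ds [ds0 Ps]] := IH (fun t ts => hs t (@mem_behead _ (a :: s) t ts)).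
exists (Num.min da ds); split; first by rewrite lt_min da0 ds0.
move=> t; rewrite in_cons => /orP [/eqP ->|ts].
  by apply: hmon Pa _ _; rewrite ?lt_min ?da0 ?ds0 // ge_min lexx.
by apply: hmon (Ps t ts) _ _; rewrite ?lt_min ?da0 ?ds0 // ge_min lexx orbT.
Qed.

Section PartD.
Variable R : realType.
Variables S T : choiceType.
Variable pi : S -> T -> bool.
Local Notation D := (B1down pi).

Lemma val_small (p : S -> R) : prob p -> countably_infinite T ->
  (forall s, finite_set (Bs pi s)) ->
  forall e : R, 0 < e -> exists t, (mass p [set s | pi s t] <= e%:E)%E.
Proof.
move=> pp infT hfin e e0.
have [F [finF hF]] := tail pp e0.
have finU : finite_set (\bigcup_(s in F) Bs pi s).
  by apply: bigcup_finite => // s _; exact: hfin.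
have [t nt] := inf_avoid infT finU; exists t.
rewrite (mass_fin _ pp) lee_fin; apply: le_trans (ltW hF).
apply: rmass_sub => // s /= h Fs; apply: nt; by exists s.
Qed.

Lemma attain (q : T -> R) (s_ : S) : prob q -> no_strict_ascending_chain D ->
  exists s0, forall s, (mass q (Bs pi s) <= mass q (Bs pi s0))%E.
Proof.
move=> pq NC.
pose M := ereal_sup (range (fun s => mass q (Bs pi s))).
have Mle1 : (M <= 1)%E.
  apply: ge_ereal_sup => _ [s _ <-]; rewrite (mass_fin _ pq) lee_fin.
  exact: rmass_le1.
have Mge0 : (0 <= M)%E.
  apply: le_trans (ereal_sup_ubound _); last by exists s_.
  by apply: mass_ge0; case: pq.
have Mfin : M = (fine M)%:E.
  by rewrite fineK // ge0_fin_numE // (le_lt_trans Mle1) // ltry.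
set m := fine M.
have ub s : rmass q (Bs pi s) <= m.
  rewrite -lee_fin -Mfin /rmass -mass_fin //; apply: ereal_sup_ubound; by exists s.
have approx d : 0 < d -> exists s, m - d < rmass q (Bs pi s).
  move=> d0; have : ((m - d)%:E < M)%E by rewrite Mfin lte_fin -/m; lra.
  move=> /ereal_sup_gt [_ [s _ <-]]; rewrite (mass_fin _ pq) lte_fin => h.
  by exists s.
case: (pselect (exists s0, m <= rmass q (Bs pi s0))) => [[s0 hs0]|nex].
  exists s0 => s; rewrite (mass_fin (Bs pi s) pq) (mass_fin (Bs pi s0) pq) lee_fin.
  exact: le_trans (ub s) hs0.
have lt s : rmass q (Bs pi s) < m.
  rewrite ltNge; apply/negP => h; apply: nex; by exists s.
exfalso.
pose DM (A : set T) := (exists s, A `<=` Bs pi s) /\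
  forall d, 0 < d -> exists s, A `<=` Bs pi s /\ m - d < rmass q (Bs pi s).
apply: (@no_chain_ext S T pi DM NC _ _ set0).
- by move=> A [].
- move=> A [[s1 As1] hA].
  have rA : rmass q A < m by apply: le_lt_trans (rmass_sub pq As1) (lt s1).
  set r := m - rmass q A.
  have r0 : 0 < r by rewrite /r; lra.
  have [F [finF hF]] := tail pq (divr_gt0 r0 (ltr0Sn _ 1)).
  suff [t [nAt DMt]] : exists t, ~ A t /\ DM (A `|` [set t]).
    exists (A `|` [set t]); split => //; split; first exact: subsetUl.
    by move=> /(_ t (or_intror erefl)).
  apply/not_existsP => hno.
  pose P t d := ~ A t -> forall s, A `|` [set t] `<=` Bs pi s ->
    rmass q (Bs pi s) <= m - d.
  have hexP t : F t -> exists d, 0 < d /\ P t d.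
    move=> _; case: (pselect (A t)) => At.
      by exists 1; split => // nAt.
    case: (pselect (exists s, A `|` [set t] `<=` Bs pi s)) => [ex|nex']; last first.
      exists 1; split => // _ s hs; exfalso; apply: nex'; by exists s.
    have : ~ (forall d, 0 < d -> exists s, A `|` [set t] `<=` Bs pi s /\
        m - d < rmass q (Bs pi s)).
      by move=> h; apply: (hno t).
    move=> /existsNP [d hd].
    case: (pselect (0 < d)) => d0; last by exfalso; apply: hd.
    exists d; split => // _ s hs; rewrite leNgt; apply/negP => hlt.
    by apply: hd => _; exists s.
  have hmon t d d' : P t d -> 0 < d' -> d' <= d -> P t d'.
    move=> Ptd _ dd' nAt s hs; have := Ptd nAt s hs; lra.
  have [d0 [d00 Pd0]] := finite_min finF hexP hmon.
  set dl := Num.min d0 (r / 2).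
  have dl0 : 0 < dl by rewrite lt_min d00 divr_gt0 // ltr0Sn.
  have dld0 : dl <= d0 by rewrite ge_min lexx.
  have dlr : dl <= r / 2 by rewrite ge_min lexx orbT.
  have [s [As hs]] := hA dl dl0.
  have hsplit := rmass_split A (Bs pi s) pq.
  have eA : Bs pi s `&` A = A by apply/setIidr.
  rewrite eA in hsplit.
  have [t [Bt [nAt Ft]]] : exists t, Bs pi s t /\ ~ A t /\ F t.
    apply/not_existsP => h.
    have sub : Bs pi s `&` ~` A `<=` ~` F.
      by move=> t [Bt nAt] Ft; apply: (h t).
    have := rmass_sub pq sub; have rdef : r = m - rmass q A by []; lra.
  have := Pd0 t Ft nAt s; rewrite subUset; have : [set t] `<=` Bs pi s by move=> _ ->.
  move=> h1 /(_ (conj As h1)); lra.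
- split; first by exists s_.
  move=> d d0; have [s hs] := approx d d0; by exists s; split.
Qed.

End PartD.

Section PartE.
Variable R : realType.
Variables S T : choiceType.
Variable pi : S -> T -> bool.
Local Notation D := (B1down pi).

Lemma hered (A B : set T) : D B -> A `<=` B -> D A.
Proof. by move=> [s hs] AB; exists s; apply: subset_trans AB hs. Qed.

Definition prec (F' F : set (set T)) := finite_set F' /\ (exists C, F' C) /\
  forall C, F' C -> exists A, F A /\ sR pi C A.

Lemma Acc_sub (F0 F : set (set T)) : F0 `<=` F -> Acc prec F -> Acc prec F0.
Proof.
move=> sub H; constructor => F' [f [ne h]]; apply: (Acc_inv H).
split; first exact: f. split; first exact: ne.
by move=> C /h [A [/sub FA sA]]; exists A.
Qed.

Lemma Acc_set0 : Acc prec set0.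
Proof.
by constructor => F' [_ [[C hC] h]]; have [A [[] _]] := h C hC.
Qed.

Lemma Acc_union (F1 : set (set T)) : Acc prec F1 ->
  forall F2, Acc prec F2 -> Acc prec (F1 `|` F2).
Proof.
elim=> {}F1 H1 IH1 F2 H2.
constructor => F' [fin [ne h]].
pose P1 := [set C | exists A, F1 A /\ sR pi C A].
have p1 : forall C, (F' `&` P1) C -> exists A, F1 A /\ sR pi C A.
  by move=> C [].
have p2 : forall C, (F' `&` ~` P1) C -> exists A, F2 A /\ sR pi C A.
  move=> C [FC nP]; have [A [[F1A|F2A] sA]] := h C FC.
    by exfalso; apply: nP; exists A.
  by exists A.
have f1 : finite_set (F' `&` P1) by apply: finite_setIl.
have f2 : finite_set (F' `&` ~` P1) by apply: finite_setIl.
case: (pselect (exists C, (F' `&` P1) C)) => ne1;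
  case: (pselect (exists C, (F' `&` ~` P1) C)) => ne2.
- have -> : F' = (F' `&` P1) `|` (F' `&` ~` P1).
    by rewrite -setIUr setUv setIT.
  apply: IH1; first by split; [exact: f1|split; [exact: ne1|exact: p1]].
  by apply: (Acc_inv H2); split; [exact: f2|split; [exact: ne2|exact: p2]].
- apply: (@Acc_sub _ (F' `&` P1)).
    move=> C FC; split => //; apply: contrapT => nP; apply: ne2; by exists C.
  by apply: H1; split; [exact: f1|split; [exact: ne1|exact: p1]].
- apply: (@Acc_sub _ (F' `&` ~` P1)).
    move=> C FC; split => // PC; apply: ne1; by exists C.
  by apply: (Acc_inv H2); split; [exact: f2|split; [exact: ne2|exact: p2]].
- exfalso; have [C FC] := ne; case: (pselect (P1 C)) => PC.
    by apply: ne1; exists C.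
  by apply: ne2; exists C.
Qed.

Lemma Acc_seq (s : seq (set T)) : forall F, F `<=` [set C | C \in s] ->
  (forall C, F C -> Acc prec [set C]) -> Acc prec F.
Proof.
elim: s => [|A s IH] F sub hA.
  apply: (Acc_sub _ Acc_set0) => C /sub; by rewrite /= in_nil.
apply: (@Acc_sub _ ((F `&` [set A]) `|` (F `&` [set C | C \in s]))).
  move=> C FC; have := sub C FC; rewrite /= in_cons => /orP [/eqP eCA|Cs].
    by left; split; [exact: FC|exact: eCA].
  by right.
apply: Acc_union.
  case: (pselect (F A)) => FA.
    apply: (@Acc_sub _ [set A]); first by move=> C [_ ->].
    exact: hA.
  apply: (Acc_sub _ Acc_set0) => C [FC eC]; apply: FA; by rewrite -eC.
apply: IH; first by move=> C [].
by move=> C [FC _]; exact: hA.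
Qed.

Lemma Acc_fin (F : set (set T)) : finite_set F ->
  (forall C, F C -> Acc prec [set C]) -> Acc prec F.
Proof.
move=> finF hA; apply: (@Acc_seq (finmap.enum_fset (fset_set F))).
  move=> C FC; have : C \in fset_set F by rewrite in_fset_set //; apply/mem_set.
  by [].
exact: hA.
Qed.

Lemma Acc_single (A : set T) : Acc (sR pi) A -> Acc prec [set A].
Proof.
elim=> {}A _ IH; constructor => F' [fin [ne h]].
apply: (Acc_fin fin) => C hC; have [A0 [e hs]] := h C hC.
rewrite e in hs; exact: (IH C hs).
Qed.

End PartE.

Section PartF.
Variable R : realType.
Variables S T : choiceType.
Variable pi : S -> T -> bool.
Local Notation D := (B1down pi).

Lemma mass_add (Q q : T -> R) B : (forall t, 0 <= Q t) -> (forall t, 0 <= q t) ->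
  mass (fun t => Q t + q t) B = (mass Q B + mass q B)%E.
Proof.
move=> Q0 q0; rewrite /mass; under eq_esum do rewrite EFinD.
by apply: esumD => t _; rewrite lee_fin.
Qed.

Lemma mass_scale (Q : T -> R) (r : R) B : (forall t, 0 <= Q t) -> 0 <= r ->
  mass (fun t => r * Q t) B = (r%:E * mass Q B)%E.
Proof.
move=> Q0 r0; rewrite /mass; under eq_esum do rewrite EFinM.
by apply: esumZ => // t; rewrite lee_fin.
Qed.

Definition FD (q : T -> R) (U : set T) := (forall t, 0 <= q t) /\
  (forall t, q t != 0 -> U t) /\ finite_set U /\ mass q setT = 1%E.

Definition Small (F : set (set T)) := forall e : R, 0 < e ->
  forall G : set T, finite_set G -> (forall A, F A -> A `<=` G) ->
  exists q U, FD q U /\ (forall t, U t -> ~ G t) /\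
    forall B A, D B -> F A -> A `<=` B -> (mass q B <= e%:E)%E.

Lemma small_empty (infT : countably_infinite T) (F : set (set T)) :
  (forall A, ~ F A) -> Small F.
Proof.
move=> h e e0 G finG _; have [t nt] := inf_avoid infT finG.
exists (ptm t), [set t]; split; [split; [|split; [|split]]|split].
- exact: ptm_ge0.
- by move=> t'; rewrite /ptm; case: (t' =P t) => // _; rewrite eqxx.
- exact: finite_set1.
- by have [] := prob_ptm R t.
- by move=> t' ->.
- by move=> B A _ hA; exfalso; exact: h A hA.
Qed.

Lemma small_step (infT : countably_infinite T) (F : set (set T)) :
  finite_set F -> (forall F', prec pi F' F -> Small F') -> Small F.
Proof.
move=> fin IH e e0 G finG AG.
have e20 : 0 < e / 2 by rewrite divr_gt0 // ltr0Sn.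
have build : forall n : nat, exists Q U, (forall t, 0 <= Q t) /\
    (forall t, Q t != 0 -> U t) /\ finite_set U /\ (forall t, U t -> ~ G t) /\
    mass Q setT = (n%:R)%:E /\ forall B A, D B -> F A -> A `<=` B ->
      (mass Q B <= (1 + n%:R * (e / 2))%:E)%E.
  elim=> [|n [Q [U [Q0 [QU [finU [UG [QT QB]]]]]]]].
    exists (fun=> 0), set0; split; [by []|split; [by move=> t; rewrite eqxx|]].
    split; first exact: finite_set0.
    split; first by [].
    split; first by rewrite /mass esum1.
    by move=> B A _ _ _; rewrite /mass esum1 // mul0r addr0 lee_fin ler01.
  pose F' := [set C | exists A t, F A /\ U t /\ ~ A t /\ D (A `|` [set t]) /\
    C = A `|` [set t]].
  have S' : Small F'.
    case: (pselect (exists C, F' C)) => ne; last first.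
      by apply: small_empty => // C hC; apply: ne; exists C.
    apply: IH; split; last split => //.
      apply: (@sub_finite_set _ _ [set x `|` [set y] | x in F & y in U]);
        last exact: finite_image2.
      move=> C [A [t [hA [Ut [_ [_ ->]]]]]]; exists A => //; by exists t.
    move=> C [A [t [hA [Ut [nAt [DC ->]]]]]]; exists A; split => //.
    split => //; split; first exact: subsetUl.
    by move=> /(_ t (or_intror erefl)).
  have AG' : forall C, F' C -> C `<=` G `|` U.
    move=> C [A [t [hA [Ut [_ [_ ->]]]]]] x [/(AG A hA) Gx| ->].
      by left.
    by right.
  have finGU : finite_set (G `|` U) by rewrite finite_setU; split.
  have [q [V [[q0 [qV [finV qT]]] [VG qB]]]] := S' (e / 2) e20 (G `|` U) finGU AG'.
  exists (fun t => Q t + q t), (U `|` V); split.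
    by move=> t; rewrite addr_ge0.
  split.
    move=> t h; case: (pselect (U t)) => [Ut|nUt]; first by left.
    have Qt0 : Q t = 0.
      case: (pselect (Q t = 0)) => // h'; exfalso; apply: nUt; apply: QU; exact/eqP.
    by right; apply: qV; rewrite Qt0 add0r in h.
  split; first by rewrite finite_setU; split.
  split.
    move=> t [/UG //|/VG h Gt]; apply: h; by left.
  split.
    by rewrite mass_add // QT qT -EFinD natr1.
  move=> B A DB hA AB; rewrite mass_add //.
  case: (pselect (exists t, B t /\ Q t != 0)) => [[t [Bt Qt]]|nex].
    have Ut := QU t Qt; have nGt := UG t Ut.
    have nAt : ~ A t by move=> At; apply: nGt; exact: AG A hA t At.
    have tB : [set t] `<=` B by move=> _ ->.
    have F'C : F' (A `|` [set t]).
      exists A, t; split => //; split => //; split => //; split => //.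
      by apply: (hered DB); rewrite subUset; split.
    have AtB : A `|` [set t] `<=` B by rewrite subUset; split.
    have h2 := qB B (A `|` [set t]) DB F'C AtB.
    have h1 := QB B A DB hA AB.
    apply: le_trans (leeD h1 h2) _.
    by rewrite -EFinD lee_fin -[(n.+1)%:R]natr1 mulrDl mul1r addrA.
  have -> : mass Q B = 0%E.
    apply: esum1 => t Bt; case: (pselect (Q t = 0)) => [->//|h].
    by exfalso; apply: nex; exists t; split => //; apply/eqP.
  rewrite add0e (mass_fin B (conj q0 qT)) lee_fin.
  apply: le_trans (rmass_le1 _ (conj q0 qT)) _.
  by rewrite lerDl mulr_ge0 // ltW.
set N := (Num.trunc (2 / e)).+1.
have NgtR : 2 / e < N%:R by exact: truncnS_gt.
have N0 : 0 < (N%:R : R) by rewrite ltr0Sn.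
have [Q [U [Q0 [QU [finU [UG [QT QB]]]]]]] := build N.
have Ninv0 : 0 <= (N%:R : R)^-1 by rewrite invr_ge0 ltW.
exists (fun t => (N%:R)^-1 * Q t), U; split.
  split; first by move=> t; rewrite mulr_ge0.
  split.
    move=> t h; apply: QU; apply: (contra_neq _ h) => ->; by rewrite mulr0.
  split => //.
  by rewrite mass_scale // QT -EFinM mulVf // gt_eqF.
split => //.
move=> B A DB hA AB; rewrite mass_scale //.
apply: le_trans (lee_wpmul2l _ (QB B A DB hA AB)) _; first by rewrite lee_fin.
rewrite -EFinM lee_fin.
have h2 : 2 < N%:R * e by rewrite -ltr_pdivrMr.
have h1 : N%:R * (N%:R)^-1 = 1 :> R by rewrite mulfV // gt_eqF.
set x := (N%:R)^-1 in h1 Ninv0 *; set n := (N%:R : R) in h1 h2 N0 *.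
nra.
Qed.

Lemma small_all (infT : countably_infinite T) :
  no_strict_ascending_chain D -> Small [set set0].
Proof.
move=> NC.
have H : forall F, Acc (prec pi) F -> finite_set F -> Small F.
  move=> F; elim=> {}F _ IH fin; apply: (small_step infT fin) => F' h.
  exact: (IH F' h (proj1 h)).
apply: H; last exact: finite_set1.
exact: Acc_single (all_acc NC set0).
Qed.

Lemma best_small (infT : countably_infinite T) :
  no_strict_ascending_chain D -> forall e : R, 0 < e ->
  exists q, @Dist R T q /\ forall s, (mass q (Bs pi s) <= e%:E)%E.
Proof.
move=> NC e e0.
have AG0 : forall A : set T, [set set0] A -> A `<=` set0 by move=> A ->.
have [q [U [[q0 [qU [finU qT]]] [_ qB]]]] :=
  small_all infT NC e0 (finite_set0 T) AG0.
exists q; split.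
  split => //; split => //.
  apply: finite_set_countable; apply: (sub_finite_set _ finU) => t /=; exact: qU.
move=> s; apply: (qB (Bs pi s) set0) => //; by exists s.
Qed.

End PartF.

End Aux.
Import Aux.
Unset Implicit Arguments. Set Strict Implicit. Set Printing Implicit Defensive.

Theorem corollary2p10 (R : realType) (S T : choiceType) (pi : S -> T -> bool) :
  countably_infinite S -> countably_infinite T ->
  (forall s, finite_set (Bs pi s)) ->
  (ascending_union_closed (B1down pi) \/ no_strict_ascending_chain (B1down pi)
   \/ LNG_free pi) ->
  let val := fun p : S -> R =>
    ereal_inf [set pimix pi p q | q in @Dist R T] in
  let best := fun q : T -> R =>
    ereal_sup [set pimix pi p q | p in @Dist R S] in
  (exists2 p0, @Dist R S p0 & val p0 = ereal_sup [set val p | p in @Dist R S]) /\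
  ereal_sup [set val p | p in @Dist R S] = 0%E /\
  (forall q, @Dist R T q -> exists2 p0, @Dist R S p0 & pimix pi p0 q = best q) /\
  ereal_inf [set best q | q in @Dist R T] = 0%E.
Proof.
move=> infS infT hfin H val best.
have NC := no_chain hfin H.
have [fS _] := infS; set s_ := fS 0%N.
have val0 : forall p, @Dist R S p -> val p = 0%E.
  move=> p pD; have pp := Dist_prob pD.
  apply/eqP; rewrite eq_le; apply/andP; split.
    apply: le0_eps => e e0; have [t ht] := val_small pp infT hfin e0.
    have : (val p <= pimix pi p (ptm t))%E.
      by apply: ereal_inf_lbound; exists (ptm t) => //; exact: Dist_ptm.
    rewrite pimix_ptm_r; last by case: pp.
    by move=> h; apply: le_trans h ht.
  apply: le_ereal_inf_tmp => _ [q qD <-]; apply: pimix_ge0.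
    by case: pp.
  by case: (Dist_prob qD).
have supval : ereal_sup [set val p | p in @Dist R S] = 0%E.
  have -> : [set val p | p in @Dist R S] = [set 0%E].
    apply/seteqP; split => x.
      by move=> [p pD <-]; rewrite /= val0.
    by move=> /= ->; exists (ptm s_); [exact: Dist_ptm|exact: val0 (Dist_ptm _ _)].
  exact: ereal_sup1.
split.
  by exists (ptm s_); [exact: Dist_ptm|rewrite supval val0 //; exact: Dist_ptm].
split => //.
split.
  move=> q qD; have pq := Dist_prob qD; have [s0 hs0] := attain s_ pq NC.
  exists (ptm s0); first exact: Dist_ptm.
  rewrite /best; apply/eqP; rewrite eq_le; apply/andP; split.
    by apply: ereal_sup_ubound; exists (ptm s0) => //; apply: Dist_ptm.
  apply: ge_ereal_sup => _ [p pD <-].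
  rewrite pimix_ptm_l; last by case: pq.
  rewrite (mass_fin (Bs pi s0) pq).
  apply: pimix_le (Dist_prob pD) _ (rmass_ge0 _ pq) _; first by case: pq.
  by move=> s; rewrite -mass_fin.
apply/eqP; rewrite eq_le; apply/andP; split.
  apply: le0_eps => e e0; have [q [qD hq]] := best_small infT NC e0.
  apply: (@le_trans _ _ (best q)); first by apply: ereal_inf_lbound; exists q.
  apply: ge_ereal_sup => _ [p pD <-].
  apply: pimix_le (Dist_prob pD) _ (ltW e0) hq.
  by case: (Dist_prob qD).
apply: le_ereal_inf_tmp => _ [q qD <-].
apply: le_trans (ereal_sup_ubound _); last by exists (ptm s_) => //; exact: Dist_ptm.
apply: pimix_ge0; first exact: ptm_ge0.
by case: (Dist_prob qD).
Qed.
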